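(* Let $n\ge3$ be odd and $m=\frac{n+1}{2}$. There exist rational normal curves $R_1,\dots,R_m\subset\mathbb{P}^n_{\mathbb{C}}$ such that: for each $1\le j\le m-1$, $R_j$ and $R_{j+1}$ meet transversally (nodally) in exactly $n+1$ points, which are in general linear position; the intersection sets $R_j\cap R_{j+1}$ for different $j$ are pairwise disjoint; and $R_i\cap R_j=\emptyset$ whenever $|i-j|\ge 2$. In other words, rational normal curve chains in $\mathbb{P}^n_{\mathbb{C}}$ exist.
   Context: Work over $\mathbb{C}$. A rational normal curve in $\mathbb{P}^n_{\mathbb{C}}$ is a curve projectively equivalent to the image of $[s:t]\mapsto[s^n:s^{n-1}t:\dots:t^n]$. For $n\ge3$ odd, a rational normal curve chain in $\mathbb{P}^n_{\mathbb{C}}$ is the reduced union $C=R_1\cup\dots\cup R_{(n+1)/2}$ of rational normal curves as in the claim: consecutive curves $R_j,R_{j+1}$ meet transversally in exactly $n+1$ points in general linear position, these intersection sets are pairwise disjoint, and there are no other intersections among the $R_i$. *)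

(* Defs.v *)
(* Projective space P^n over C is modelled by nonzero row
   vectors in C^(n+1) up to nonzero scalars, where C = R[i] = complex R for a
   realType R (every realType is the real numbers, so R[i] is the complex
   numbers). *)
From HB Require Import structures.
From mathcomp Require Import all_boot all_order all_algebra.
From mathcomp Require Import complex.
From mathcomp Require Import reals.
Set Implicit Arguments. Unset Strict Implicit. Unset Printing Implicit Defensive.
Import Order.TTheory GRing.Theory Num.Theory.
Local Open Scope ring_scope.

Section Proj.
Variable (C : fieldType) (n : nat).

Definition proj_eq (x y : 'rV[C]_n.+1) : Prop :=
  exists c : C, c != 0 /\ y = c *: x.

Definition rnc_param (s t : C) : 'rV[C]_n.+1 :=
  \row_(i < n.+1) (s ^+ (n - i) * t ^+ i).

(* partial derivatives of the parametrization (spanning the affine cone over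
   the tangent line) *)
Definition rnc_ds (s t : C) : 'rV[C]_n.+1 :=
  \row_(i < n.+1) ((n - i)%:R * s ^+ (n - i).-1 * t ^+ i).
Definition rnc_dt (s t : C) : 'rV[C]_n.+1 :=
  \row_(i < n.+1) (i%:R * s ^+ (n - i) * t ^+ i.-1).

(* The rational normal curve R_A := image of the standard one under the
   projective transformation given by the invertible matrix A. *)
Definition rnc_at (A : 'M[C]_n.+1) (s t : C) (x : 'rV[C]_n.+1) : Prop :=
  (s != 0 \/ t != 0) /\ proj_eq (rnc_param s t *m A) x.

Definition on_rnc (A : 'M[C]_n.+1) (x : 'rV[C]_n.+1) : Prop :=
  x != 0 /\ exists s t, rnc_at A s t x.

(* tangent-line matrix of R_A at parameter (s,t): its row space is the
   2-dimensional subspace of C^(n+1) corresponding to the tangent line *)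
Definition rnc_tangent (A : 'M[C]_n.+1) (s t : C) : 'M[C]_(2, n.+1) :=
  col_mx (rnc_ds s t *m A) (rnc_dt s t *m A).

(* R_A and R_B meet transversally at x: the two tangent lines at x are
   distinct, i.e. the sum of the two 2-dimensional subspaces (which share the
   line of x) is 3-dimensional. *)
Definition transversal_at (A B : 'M[C]_n.+1) (x : 'rV[C]_n.+1) : Prop :=
  forall s t s' t', rnc_at A s t x -> rnc_at B s' t' x ->
    \rank (col_mx (rnc_tangent A s t) (rnc_tangent B s' t')) = 3%N.

(* R_A and R_B meet transversally in exactly n+1 points which are in general
   linear position: the common points are exactly the points represented by
   the rows of an invertible matrix P (n+1 linearly independent, hence
   distinct, points of P^n), and the intersection is transversal at each. *)
Definition rnc_meet_nodally_gen (A B : 'M[C]_n.+1) : Prop :=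
  exists P : 'M[C]_n.+1,
    [/\ P \in unitmx,
        (forall k : 'I_n.+1, on_rnc A (row k P) /\ on_rnc B (row k P)),
        (forall x, on_rnc A x -> on_rnc B x ->
           exists k : 'I_n.+1, proj_eq (row k P) x) &
        (forall k : 'I_n.+1, transversal_at A B (row k P))].

End Proj.

(* Main.v *)
Require Import Defs.
From HB Require Import structures.
From mathcomp Require Import all_boot all_order all_algebra all_field.
From mathcomp Require Import complex reals.
From mathcomp Require Import zify ring.
Set Implicit Arguments. Unset Strict Implicit. Unset Printing Implicit Defensive.
Import Order.TTheory GRing.Theory Num.Theory.
Local Open Scope ring_scope.

Section Chain.
Variable (C : numClosedFieldType) (n : nat).
Hypothesis hn : (3 <= n)%N.

Definition pe (j i : nat) : nat :=
  if (i <= 2 * j)%N then (2 * j - i)%N else (2 * j + n.+1 - i)%N.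

Definition De (j i : nat) : C :=
  if (0 < i)%N && (i <= 2 * j)%N then ((i + 3) %/ 2)%:R else 1.

Definition Amat (j : nat) : 'M[C]_n.+1 :=
  \matrix_(k < n.+1, i < n.+1) (if (k : nat) == pe j i then De j i else 0).

Lemma pe_lt j i : (2 * j < n)%N -> (i < n.+1)%N -> (pe j i < n.+1)%N.
Proof. rewrite /pe; case: (leqP i (2*j)) => *; lia. Qed.

Lemma pe_inv j i : (2 * j < n)%N -> (i < n.+1)%N -> pe j (pe j i) = i.
Proof. rewrite /pe => h1 h2; case: (leqP i (2*j)) => h3; case: leqP => h4; lia. Qed.

Lemma De_neq0 j i : De j i != 0.
Proof. rewrite /De; case: ifP => _; last exact: oner_neq0.
rewrite pnatr_eq0; apply/eqP; lia. Qed.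

Lemma mulA j (r : 'rV[C]_n.+1) (i : 'I_n.+1) : (2 * j < n)%N ->
  (r *m Amat j) 0 i = r 0 (inord (pe j i)) * De j i.
Proof.
move=> hj; rewrite mxE (bigD1 (inord (pe j i))) //= big1 ?addr0.
  by rewrite mxE inordK ?eqxx // pe_lt.
move=> k hk; rewrite mxE; case: eqP; last by rewrite mulr0.
move=> e; case/eqP: hk; apply: val_inj; rewrite /= inordK ?pe_lt // -e //.
Qed.

Lemma paramA j s t (i : 'I_n.+1) : (2 * j < n)%N ->
  (rnc_param n s t *m Amat j) 0 i = De j i * (s ^+ (n - pe j i) * t ^+ pe j i).
Proof. by move=> hj; rewrite mulA // mxE inordK ?pe_lt // mulrC. Qed.

Lemma dsA j s t (i : 'I_n.+1) : (2 * j < n)%N ->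
  (rnc_ds n s t *m Amat j) 0 i =
  De j i * ((n - pe j i)%:R * s ^+ (n - pe j i).-1 * t ^+ pe j i).
Proof. by move=> hj; rewrite mulA // mxE inordK ?pe_lt // mulrC. Qed.

Lemma dtA j s t (i : 'I_n.+1) : (2 * j < n)%N ->
  (rnc_dt n s t *m Amat j) 0 i =
  De j i * ((pe j i)%:R * s ^+ (n - pe j i) * t ^+ (pe j i).-1).
Proof. by move=> hj; rewrite mulA // mxE inordK ?pe_lt // mulrC. Qed.

Lemma Amat_unit j : (2 * j < n)%N -> Amat j \in unitmx.
Proof.
move=> hj.
pose B : 'M[C]_n.+1 := \matrix_(i < n.+1, k < n.+1)
   (if (k : nat) == pe j i then (De j i)^-1 else 0).
suff h : Amat j *m B = 1%:M by case: (mulmx1_unit h).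
apply/matrixP => k k'; rewrite !mxE (bigD1 (inord (pe j k))) //= big1 ?addr0.
  rewrite !mxE inordK ?pe_lt // (pe_inv hj (ltn_ord k)) eqxx.
  case: (eqVneq k' k) => [->|ne]; first by rewrite eqxx divff // De_neq0.
  have -> : ((k' : nat) == k) = false by apply/negbTE; rewrite -(inj_eq val_inj) in ne.
  by rewrite mulr0.
move=> i hi; rewrite !mxE; case: eqP => e; last by rewrite mul0r.
case/eqP: hi; apply: val_inj; rewrite /= inordK ?pe_lt // e pe_inv //.
Qed.



Lemma pe_2j j : (2 * j < n)%N -> pe j (2 * j) = 0%N.
Proof. by rewrite /pe leqnn subnn. Qed.
Lemma pe_2j1 j : (2 * j < n)%N -> pe j (2 * j).+1 = n.
Proof. rewrite /pe => h; case: leqP => *; lia. Qed.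
Lemma pe_eq0 j (i : 'I_n.+1) : (2 * j < n)%N -> pe j i = 0%N -> (i : nat) = (2 * j)%N.
Proof. move: (ltn_ord i); rewrite /pe => hi h; case: leqP => *; lia. Qed.
Lemma pe_eqn j (i : 'I_n.+1) : (2 * j < n)%N -> pe j i = n -> (i : nat) = (2 * j).+1.
Proof. move: (ltn_ord i); rewrite /pe => hi h; case: leqP => *; lia. Qed.
Lemma pe_le j (i : 'I_n.+1) : (2 * j < n)%N -> (pe j i <= n)%N.
Proof. move=> h; have := pe_lt h (ltn_ord i); lia. Qed.

Lemma on_rncE j (x : 'rV[C]_n.+1) : on_rnc (Amat j) x -> (2 * j < n)%N ->
  x != 0 /\ exists s t c, [/\ s != 0 \/ t != 0, c != 0 &
   forall i, x 0 i = c * (De j i * (s ^+ (n - pe j i) * t ^+ pe j i))].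
Proof.
move=> [x0 [s [t [st [c [c0 ex]]]]]] hj; split=> //.
by exists s, t, c; split=> // i; rewrite ex mxE paramA.
Qed.

Lemma row_neq0 (x : 'rV[C]_n.+1) : x != 0 -> exists i, x 0 i != 0.
Proof.
move=> x0; case: (boolP [exists i, x 0 i != 0]) => [/existsP //|/existsPn h].
case/eqP: x0; apply/matrixP=> a b.
by rewrite (ord1 a) mxE; move/negPn/eqP: (h b).
Qed.

Lemma support j x : (2 * j < n)%N -> on_rnc (Amat j) x ->
  (forall i, x 0 i != 0) \/
  exists a : 'I_n.+1, ((a : nat) = 2 * j \/ (a : nat) = (2 * j).+1)%N /\
     forall i, i != a -> x 0 i = 0.
Proof.
move=> hj /on_rncE /(_ hj) [x0 [s [t [c [st c0 hx]]]]].
have [s0|s0] := eqVneq s 0.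
  right; exists (inord (2 * j).+1); rewrite inordK; last lia.
  split; first by right.
  move=> i hi; rewrite hx s0 expr0n.
  case: eqP => e; last by rewrite !mul0r !mulr0.
  case/eqP: hi; apply: val_inj; rewrite /= inordK; last lia.
  apply: pe_eqn => //; have := pe_le i hj; lia.
have [t0|t0] := eqVneq t 0.
  right; exists (inord (2 * j)); rewrite inordK; last lia.
  split; first by left.
  move=> i hi; rewrite hx t0 expr0n.
  case: eqP => e; last by rewrite !mulr0.
  case/eqP: hi; apply: val_inj; rewrite /= inordK; last lia.
  exact: pe_eq0.
by left=> i; rewrite hx !mulf_neq0 ?expf_neq0 // ?De_neq0.
Qed.

Lemma torus j k x : (2 * j < n)%N -> (2 * k < n)%N -> j <> k ->
  on_rnc (Amat j) x -> on_rnc (Amat k) x -> forall i, x 0 i != 0.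
Proof.
move=> hj hk jk hx hy.
have [x0 _] := on_rncE hx hj.
have [i0 xi0] := row_neq0 x0.
have other : forall a : 'I_n.+1, exists i : 'I_n.+1, i != a.
  move=> a; exists (inord (if (a : nat) == 0%N then 1 else 0)).
  apply/eqP=> e; move: (congr1 val e); rewrite /= inordK; case: eqP; lia.
case: (support hj hx) => [//|[a [ha xa]]].
case: (support hk hy) => [ally|[b [hb xb]]].
  by have [i ia] := other a; move: (ally i); rewrite xa ?eqxx.
have ab : a != b by apply/eqP => e; subst b; lia.
have i0a : i0 = a by apply/eqP; apply: contraNT xi0 => /xa ->.
have i0b : i0 = b by apply/eqP; apply: contraNT xi0 => /xb ->.
by move: ab; rewrite -i0a -i0b eqxx.
Qed.

Lemma torus_st j (x : 'rV[C]_n.+1) (s t c : C) : (2 * j < n)%N -> (forall i, x 0 i != 0) ->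
  (forall i : 'I_n.+1, x 0 i = c * (De j i * (s ^+ (n - pe j i) * t ^+ pe j i))) ->
  s != 0 /\ t != 0.
Proof.
move=> hj hx e; split.
  apply/eqP=> s0; move: (hx (inord (2 * j))); rewrite e inordK; last lia.
  by rewrite pe_2j // s0 subn0 expr0n; case: n hn => // n' _; rewrite !mul0r !mulr0 eqxx.
apply/eqP=> t0; move: (hx (inord (2 * j).+1)); rewrite e inordK; last lia.
by rewrite pe_2j1 // t0 expr0n; case: n hn => // n' _; rewrite !mulr0 eqxx.
Qed.



Lemma quad (x : 'rV[C]_n.+1) (a b c : 'I_n.+1) (g Da Db Dc s t : C) (ea eb ec fa fb fc : nat) :
  x 0 a = g * (Da * (s ^+ ea * t ^+ fa)) ->
  x 0 b = g * (Db * (s ^+ eb * t ^+ fb)) ->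
  x 0 c = g * (Dc * (s ^+ ec * t ^+ fc)) ->
  (ea + ec = eb + eb)%N -> (fa + fc = fb + fb)%N ->
  x 0 a * x 0 c * (Db * Db) = x 0 b * x 0 b * (Da * Dc).
Proof.
move=> -> -> -> e f.
transitivity (g * g * (Da * Dc * (Db * Db)) * (s ^+ (ea + ec) * t ^+ (fa + fc))).
  rewrite !exprD; ring.
rewrite e f !exprD; ring.
Qed.

Lemma De_big j i : (2 * j < i)%N -> De j i = 1.
Proof. by rewrite /De => h; case: ifP => // /andP [_ h2]; lia. Qed.
Lemma De_small j i : (0 < i)%N -> (i <= 2 * j)%N -> De j i = ((i + 3) %/ 2)%:R.
Proof. by rewrite /De => h1 h2; rewrite h1 h2. Qed.

Lemma nonadj j k (x : 'rV[C]_n.+1) : (2 * k < n)%N -> (j + 2 <= k)%N ->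
  ~ (on_rnc (Amat j) x /\ on_rnc (Amat k) x).
Proof.
move=> hk hjk [hx hy].
have hj : (2 * j < n)%N by lia.
have nz := torus hj hk (ltac:(lia)) hx hy.
have [_ [s [t [c [_ _ ex]]]]] := on_rncE hx hj.
have [_ [s' [t' [c' [_ _ ey]]]]] := on_rncE hy hk.
pose a : 'I_n.+1 := inord (2 * j).+1.
pose b : 'I_n.+1 := inord (2 * j).+2.
pose d : 'I_n.+1 := inord (2 * j).+3.
have va : (a : nat) = (2 * j).+1 by rewrite inordK; lia.
have vb : (b : nat) = (2 * j).+2 by rewrite inordK; lia.
have vd : (d : nat) = (2 * j).+3 by rewrite inordK; lia.
have pja : pe j a = n by rewrite /pe va; case: leqP; lia.
have pjb : pe j b = n.-1 by rewrite /pe vb; case: leqP; lia.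
have pjd : pe j d = n.-2 by rewrite /pe vd; case: leqP; lia.
have pka : pe k a = (2 * k - (2 * j).+1)%N by rewrite /pe va; case: leqP; lia.
have pkb : pe k b = (2 * k - (2 * j).+2)%N by rewrite /pe vb; case: leqP; lia.
have pkd : pe k d = (2 * k - (2 * j).+3)%N by rewrite /pe vd; case: leqP; lia.
have q1 := quad (ex a) (ex b) (ex d).
rewrite pja pjb pjd in q1; have {}q1 := q1 ltac:(lia) ltac:(lia).
have q2 := quad (ey a) (ey b) (ey d).
rewrite pka pkb pkd in q2; have {}q2 := q2 ltac:(lia) ltac:(lia).
rewrite !De_big ?va ?vb ?vd in q1; try lia.
rewrite !De_small ?va ?vb ?vd in q2; try lia.
have e1 : (((2 * j).+1 + 3) %/ 2 = j + 2)%N by lia.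
have e2 : (((2 * j).+2 + 3) %/ 2 = j + 2)%N by lia.
have e3 : (((2 * j).+3 + 3) %/ 2 = j + 3)%N by lia.
rewrite e1 e2 e3 !mulr1 in q1 q2.
rewrite q1 in q2.
set Y := x 0 b * x 0 b in q2.
set K := (j + 2)%:R : C in q2.
have hK : (j + 3)%:R = K + 1 :> C by rewrite /K (_ : (j + 3 = (j + 2) + 1)%N) ?natrD //; lia.
rewrite hK in q2.
have h0 : Y * (K * (K + 1)) - Y * (K * K) = 0 by rewrite -q2 subrr.
have : Y * K = 0 by rewrite -h0; ring.
apply/eqP; rewrite !mulf_eq0 negb_or (negPf (nz b)) /= /K pnatr_eq0; lia.
Qed.

Lemma four j k (x : 'rV[C]_n.+1) : (2 * j.+1 < n)%N -> (2 * k.+1 < n)%N -> j <> k ->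
  ~ (on_rnc (Amat j) x /\ on_rnc (Amat j.+1) x /\
     on_rnc (Amat k) x /\ on_rnc (Amat k.+1) x).
Proof.
move=> hj hk jk [h1 [h2 [h3 h4]]].
case: (ltngtP j k) => c.
- by apply: (@nonadj j k.+1 x) => //; lia.
- by apply: (@nonadj k j.+1 x) => //; lia.
- by [].
Qed.



Lemma roots_exist (K : C) : K != 0 -> exists W : seq C,
  [/\ size W = n.+1, uniq W & forall z, (z \in W) = (z ^+ n.+1 == K)].
Proof.
move=> K0.
set q : {poly C} := 'X^(n.+1) - K%:P.
have [rs hq] := closed_field_poly_normal q.
rewrite lead_coefXnsubC // scale1r in hq.
have hroot z : (z \in rs) = (z ^+ n.+1 == K).
  by rewrite -root_prod_XsubC -hq /root !hornerE subr_eq0.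
exists rs; split=> //.
  by have := size_XnsubC K (ltn0Sn n); rewrite -/q hq size_prod_XsubC => -[].
rewrite -separable_prod_XsubC -hq unlock.
apply/Bezout_eq1_coprimepP.
exists (- (K^-1)%:P, ((n.+1%:R * K)^-1)%:P * 'X) => /=.
rewrite /q derivB derivC subr0 derivXn /=.
have f1 : (K^-1)%:P * K%:P = 1 by rewrite -polyCM mulVf.
have f2 : ((n.+1%:R * K)^-1)%:P * n.+1%:R = (K^-1)%:P.
  by rewrite -polyC_natr -polyCM invfM mulrAC mulVf ?pnatr_eq0 // mul1r.
rewrite exprS -['X^n *+ _]mulr_natr.
transitivity (- (K^-1)%:P * ('X * 'X^n) + (K^-1)%:P * K%:P +
   (((n.+1%:R * K)^-1)%:P * n.+1%:R) * ('X * 'X^n)); first ring.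
rewrite f1 f2; ring.
Qed.



Lemma norm_entry j (s t : C) (i : 'I_n.+1) : (2 * j < n)%N -> s != 0 ->
  s ^+ (n - pe j i) * t ^+ pe j i = s ^+ n * (t / s) ^+ pe j i.
Proof.
move=> hj s0; rewrite exprB ?unitfE // ?pe_le // expr_div_n.
by field; rewrite expf_neq0.
Qed.

Section Adj.
Variable j : nat.
Hypothesis hj1 : (2 * j.+1 < n)%N.
Let hj : (2 * j < n)%N. Proof. lia. Qed.
Let K : C := (j + 2)%:R.
Let K0 : K != 0. Proof. by rewrite /K pnatr_eq0; lia. Qed.

Let i1 : 'I_n.+1 := inord (2 * j).+1.
Let i2 : 'I_n.+1 := inord (2 * j).+2.
Let i3 : 'I_n.+1 := inord (2 * j).+3.
Let v1 : (i1 : nat) = (2 * j).+1. Proof. rewrite inordK; lia. Qed.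
Let v2 : (i2 : nat) = (2 * j).+2. Proof. rewrite inordK; lia. Qed.
Let v3 : (i3 : nat) = (2 * j).+3. Proof. rewrite inordK; lia. Qed.

Let pj1 : pe j i1 = n. Proof. by rewrite /pe v1; case: leqP; lia. Qed.
Let pj2 : pe j i2 = n.-1. Proof. by rewrite /pe v2; case: leqP; lia. Qed.
Let pj3 : pe j i3 = n.-2. Proof. by rewrite /pe v3; case: leqP; lia. Qed.
Let pk1 : pe j.+1 i1 = 1%N. Proof. by rewrite /pe v1; case: leqP; lia. Qed.
Let pk2 : pe j.+1 i2 = 0%N. Proof. by rewrite /pe v2; case: leqP; lia. Qed.
Let pk3 : pe j.+1 i3 = n. Proof. by rewrite /pe v3; case: leqP; lia. Qed.
Let dj1 : De j i1 = 1. Proof. by rewrite De_big // v1. Qed.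
Let dj2 : De j i2 = 1. Proof. by rewrite De_big // v2; lia. Qed.
Let dj3 : De j i3 = 1. Proof. by rewrite De_big // v3; lia. Qed.
Let dk1 : De j.+1 i1 = K. Proof. rewrite De_small v1 /K; try lia. by congr _%:R; lia. Qed.
Let dk2 : De j.+1 i2 = K. Proof. rewrite De_small v2 /K; try lia. by congr _%:R; lia. Qed.
Let dk3 : De j.+1 i3 = 1. Proof. by rewrite De_big // v3; lia. Qed.

Lemma shift_entry (i : 'I_n.+1) : i != i1 -> i != i2 ->
  pe j.+1 i = (pe j i).+2 /\ De j.+1 i = De j i.
Proof.
move=> h1 h2.
have n1 : (i : nat) <> (2 * j).+1 by move=> e; case/eqP: h1; apply: val_inj; rewrite /= v1.
have n2 : (i : nat) <> (2 * j).+2 by move=> e; case/eqP: h2; apply: val_inj; rewrite /= v2.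
have hi := ltn_ord i.
split.
  by rewrite /pe; case: (leqP i (2 * j)) => h; case: (leqP i (2 * j.+1)) => h'; lia.
rewrite /De; case: (leqP i (2 * j)) => h.
  by rewrite (_ : (i <= 2 * j.+1)%N = true) //; lia.
rewrite (_ : (i <= 2 * j.+1)%N = false) ?andbF //; lia.
Qed.

Lemma adj_complete x : on_rnc (Amat j) x -> on_rnc (Amat j.+1) x ->
  exists u g, [/\ u ^+ n.+1 = K, g != 0 & x = g *: (rnc_param n 1 u *m Amat j)].
Proof.
move=> hx hy.
have nz := torus hj hj1 (ltac:(lia)) hx hy.
have [_ [s [t [c [_ c0 ex]]]]] := on_rncE hx hj.
have [_ [s' [t' [c' [_ c0' ey]]]]] := on_rncE hy hj1.
have [s0 t0] := torus_st hj nz ex.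
have [s0' t0'] := torus_st hj1 nz ey.
set u := t / s; set v := t' / s'.
have u0 : u != 0 by rewrite mulf_neq0 ?invr_eq0.
have vv0 : v != 0 by rewrite mulf_neq0 ?invr_eq0.
set g := c * s ^+ n; set g' := c' * s' ^+ n.
have g0 : g != 0 by rewrite mulf_neq0 ?expf_neq0.
have g0' : g' != 0 by rewrite mulf_neq0 ?expf_neq0.
have ex' i : x 0 i = g * (De j i * u ^+ pe j i).
  by rewrite ex norm_entry // /g; ring.
have ey' i : x 0 i = g' * (De j.+1 i * v ^+ pe j.+1 i).
  by rewrite ey norm_entry // /g'; ring.
have E1 := etrans (esym (ex' i1)) (ey' i1).
have E2 := etrans (esym (ex' i2)) (ey' i2).
have E3 := etrans (esym (ex' i3)) (ey' i3).
rewrite pj1 pk1 dj1 dk1 in E1; rewrite pj2 pk2 dj2 dk2 in E2; rewrite pj3 pk3 dj3 dk3 in E3.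
have [n2 hn2] : exists n2, n = n2.+3 by exists (n - 3)%N; lia.
rewrite hn2 /= in E1 E2 E3.
have uv : u = v.
  have : g' * K * (v - u) = 0.
    transitivity (g * (1 * u ^+ n2.+3) - u * (g * (1 * u ^+ n2.+2))); last first.
      by rewrite !exprS; ring.
    by rewrite E1 E2; ring.
  case: (eqVneq u v) => // ne.
  by move/eqP; rewrite (negPf (mulf_neq0 (mulf_neq0 g0' K0) _)) // subr_eq0 eq_sym.
rewrite -uv in E1 E3.
exists u, g; split=> //.
  rewrite hn2.
  have : g * u ^+ n2.+1 * (K - u ^+ n2.+4) = 0.
    transitivity (K * (g * (1 * u ^+ n2.+1)) - (g * (1 * u ^+ n2.+2)) * u ^+ n2.+3).
      by rewrite !exprS; ring.
    rewrite E3 E2; ring.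
  case: (eqVneq (u ^+ n2.+4) K) => // ne.
  by move/eqP; rewrite (negPf (mulf_neq0 (mulf_neq0 g0 (expf_neq0 _ u0)) _)) // subr_eq0 eq_sym.
by apply/matrixP => a b; rewrite (ord1 a) ex' mxE paramA // expr1n mul1r.
Qed.




Let i0 : 'I_n.+1 := inord (2 * j).
Let v0 : (i0 : nat) = (2 * j)%N. Proof. rewrite inordK; lia. Qed.
Let pj0 : pe j i0 = 0%N. Proof. by rewrite /pe v0; case: leqP; lia. Qed.
Let pk0 : pe j.+1 i0 = 2%N. Proof. by rewrite /pe v0; case: leqP; lia. Qed.
Let dk0 : De j.+1 i0 = De j i0.
Proof.
have h1 : i0 != i1 by apply/eqP => /(congr1 val); rewrite /= v0 v1; lia.
have h2 : i0 != i2 by apply/eqP => /(congr1 val); rewrite /= v0 v2; lia.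
by have [_ ->] := shift_entry h1 h2.
Qed.

Lemma w_neq0 w : w ^+ n.+1 = K -> w != 0.
Proof. by move=> hw; apply/eqP => w0; move: K0; rewrite -hw w0 expr0n /= eqxx. Qed.

Lemma entry_shift (w : C) (i : 'I_n.+1) : w ^+ n.+1 = K ->
  De j i * w ^+ pe j i = w ^- 2 * (De j.+1 i * w ^+ pe j.+1 i).
Proof.
move=> hw.
have w0 := w_neq0 hw.
have [n1 hn1] : exists n1, n = n1.+1 by exists n.-1; lia.
case: (eqVneq i i1) => [->|h1].
  rewrite pj1 pk1 dj1 dk1 -hw [w ^+ n.+1]exprS; by field; rewrite ?expf_neq0 ?w0.
case: (eqVneq i i2) => [->|h2].
  rewrite pj2 pk2 dj2 dk2 -hw hn1 /= [w ^+ n1.+2]exprS [w ^+ n1.+1]exprS; by field; rewrite ?expf_neq0 ?w0.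
have [-> ->] := shift_entry h1 h2.
rewrite [w ^+ (pe j i).+2]exprS [w ^+ (pe j i).+1]exprS; by field; rewrite ?expf_neq0 ?w0.
Qed.

Let pt (w : C) := rnc_param n 1 w *m Amat j.

Lemma pt_entry w (i : 'I_n.+1) : pt w 0 i = De j i * w ^+ pe j i.
Proof. by rewrite /pt paramA // expr1n mul1r. Qed.

Lemma pt_shift w : w ^+ n.+1 = K -> pt w = w ^- 2 *: (rnc_param n 1 w *m Amat j.+1).
Proof.
move=> hw; apply/matrixP => a b; rewrite (ord1 a) pt_entry [in RHS]mxE paramA //.
by rewrite expr1n mul1r entry_shift.
Qed.


Lemma pt_nz w : w ^+ n.+1 = K -> forall i, pt w 0 i != 0.
Proof. by move=> hw i; rewrite pt_entry mulf_neq0 ?De_neq0 ?expf_neq0 ?w_neq0. Qed.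

Lemma pt_neq0 w : w ^+ n.+1 = K -> pt w != 0.
Proof.
move=> hw; apply/eqP => e; move: (pt_nz hw i0); rewrite e mxE eqxx //.
Qed.

Lemma pt_on w : w ^+ n.+1 = K -> on_rnc (Amat j) (pt w) /\ on_rnc (Amat j.+1) (pt w).
Proof.
move=> hw; split; split; try exact: pt_neq0.
  exists 1, w; split; first by left; exact: oner_neq0.
  by exists 1; rewrite scale1r oner_neq0.
exists 1, w; split; first by left; exact: oner_neq0.
exists (w ^- 2); rewrite invr_eq0 expf_neq0 ?w_neq0 //; split => //.
exact: pt_shift.
Qed.




Lemma get_param jj (x : 'rV[C]_n.+1) (g0 w s t : C) (a b : 'I_n.+1) :
  (2 * jj < n)%N -> g0 != 0 -> w != 0 -> x = g0 *: (rnc_param n 1 w *m Amat jj) ->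
  pe jj b = (pe jj a).+1 -> rnc_at (Amat jj) s t x -> s != 0 /\ t = w * s.
Proof.
move=> hjj g00 w0 ex hab [st [c [c0 ex2]]].
have ex1 i : x 0 i = g0 * (De jj i * w ^+ pe jj i).
  by rewrite ex mxE paramA // expr1n mul1r.
have ex2' i : x 0 i = c * (De jj i * (s ^+ (n - pe jj i) * t ^+ pe jj i)).
  by rewrite ex2 mxE paramA.
have nz i : x 0 i != 0 by rewrite ex1 !mulf_neq0 ?De_neq0 ?expf_neq0.
have [s0 t0] := torus_st hjj nz ex2'.
set u := t / s; set G := c * s ^+ n.
have ex3 i : x 0 i = G * (De jj i * u ^+ pe jj i).
  by rewrite ex2' norm_entry // /G; ring.
have ea := etrans (esym (ex1 a)) (ex3 a).
have eb := etrans (esym (ex1 b)) (ex3 b).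
rewrite hab in eb.
have G0 : G != 0 by rewrite mulf_neq0 ?expf_neq0.
have u0 : u != 0 by rewrite mulf_neq0 ?invr_eq0.
have : G * De jj a * De jj b * u ^+ pe jj a * (w - u) = 0.
  transitivity (De jj b * w * (G * (De jj a * u ^+ pe jj a)) -
                De jj a * (G * (De jj b * u ^+ (pe jj a).+1))).
    by rewrite exprS; ring.
  by rewrite -ea -eb exprS; ring.
case: (eqVneq w u) => [wu _|ne].
  by split=> //; rewrite wu /u mulrVK // unitfE.
by move/eqP; rewrite (negPf (mulf_neq0 _ _)) // ?subr_eq0 // !mulf_neq0 ?De_neq0 ?expf_neq0.
Qed.

Lemma ds_scale (s w : C) : rnc_ds n s (w * s) = s ^+ n.-1 *: rnc_ds n 1 w.
Proof.
apply/matrixP => a q; rewrite !mxE expr1n mulr1.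
have hq := ltn_ord q.
case: (eqVneq (q : nat) n) => [->|ne]; first by rewrite subnn !mul0r mulr0.
have -> : s ^+ n.-1 = s ^+ (n - q).-1 * s ^+ q by rewrite -exprD; congr (_ ^+ _); lia.
rewrite exprMn; ring.
Qed.

Lemma dt_scale (s w : C) : rnc_dt n s (w * s) = s ^+ n.-1 *: rnc_dt n 1 w.
Proof.
apply/matrixP => a q; rewrite !mxE expr1n mulr1.
have hq := ltn_ord q.
case: (eqVneq (q : nat) 0%N) => [->|ne]; first by rewrite !mul0r mulr0.
have -> : s ^+ n.-1 = s ^+ (n - q) * s ^+ q.-1 by rewrite -exprD; congr (_ ^+ _); lia.
rewrite exprMn; ring.
Qed.

Lemma tangent_scale jj (s w : C) :
  rnc_tangent (Amat jj) s (w * s) = s ^+ n.-1 *: rnc_tangent (Amat jj) 1 w.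
Proof. by rewrite /rnc_tangent ds_scale dt_scale -!scalemxAl -scale_col_mx. Qed.

Lemma sub_colL m1 m2 (A : 'M[C]_(m1, n.+1)) (B : 'M_(m2, n.+1)) : (A <= col_mx A B)%MS.
Proof. by rewrite -addsmxE addsmxSl. Qed.
Lemma sub_colR m1 m2 (A : 'M[C]_(m1, n.+1)) (B : 'M_(m2, n.+1)) : (B <= col_mx A B)%MS.
Proof. by rewrite -addsmxE addsmxSr. Qed.

Lemma rank_scale (T1 T2 : 'M[C]_(2, n.+1)) (a b : C) : a != 0 -> b != 0 ->
  \rank (col_mx (a *: T1) (b *: T2)) = \rank (col_mx T1 T2).
Proof.
move=> a0 b0; apply: eqmx_rank; rewrite !col_mx_sub.
rewrite !scalemx_sub ?sub_colL ?sub_colR //=.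
have h1 : (T1 <= a *: T1)%MS by rewrite -{1}[T1](scalerK a0) scalemx_sub.
have h2 : (T2 <= b *: T2)%MS by rewrite -{1}[T2](scalerK b0) scalemx_sub.
by rewrite (submx_trans h1 (sub_colL _ _)) (submx_trans h2 (sub_colR _ _)).
Qed.




Lemma euler (w : C) : rnc_ds n 1 w + w *: rnc_dt n 1 w = n%:R *: rnc_param n 1 w.
Proof.
apply/matrixP => a q; rewrite !mxE !expr1n !mulr1 !mul1r.
have hq := ltn_ord q.
case: (eqVneq (q : nat) 0%N) => [e|ne]; first by rewrite e !mul0r mulr0 addr0 subn0.
have -> : w * (q%:R * w ^+ q.-1) = q%:R * w ^+ q.
  by rewrite mulrCA -exprS prednK // lt0n.
by rewrite -mulrDl -natrD subnK // -ltnS.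
Qed.

Lemma eulerA jj (w : C) : rnc_ds n 1 w *m Amat jj + w *: (rnc_dt n 1 w *m Amat jj)
   = n%:R *: (rnc_param n 1 w *m Amat jj).
Proof. by rewrite !scalemxAl -mulmxDl euler. Qed.

Lemma rank3 w : w ^+ n.+1 = K ->
  \rank (col_mx (rnc_tangent (Amat j) 1 w) (rnc_tangent (Amat j.+1) 1 w)) = 3%N.
Proof.
move=> hw; rewrite /rnc_tangent.
have w0 := w_neq0 hw.
set a := rnc_ds n 1 w *m Amat j; set b := rnc_dt n 1 w *m Amat j.
set c := rnc_ds n 1 w *m Amat j.+1; set d := rnc_dt n 1 w *m Amat j.+1.
set Q := col_mx (col_mx a b) d.
have hc : c = w ^+ 2 *: (a + w *: b) - w *: d.
  have E1 : a + w *: b = n%:R *: pt w by exact: eulerA.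
  have E2 : c + w *: d = n%:R *: (rnc_param n 1 w *m Amat j.+1) by exact: eulerA.
  have E3 : rnc_param n 1 w *m Amat j.+1 = w ^+ 2 *: pt w.
    by rewrite pt_shift // scalerA mulfV ?expf_neq0 // scale1r.
  by rewrite E1 -(addrK (w *: d) c) E2 E3 !scalerA mulrC.
have aQ : (a <= Q)%MS by apply: submx_trans (sub_colL a b) (sub_colL _ d).
have bQ : (b <= Q)%MS by apply: submx_trans (sub_colR a b) (sub_colL _ d).
have dQ : (d <= Q)%MS by apply: sub_colR.
have -> : \rank (col_mx (col_mx a b) (col_mx c d)) = \rank Q.
  apply: eqmx_rank; rewrite !col_mx_sub aQ bQ dQ /=.
  rewrite (submx_trans (sub_colL _ _) (sub_colL _ _)) (submx_trans (sub_colR a b) (sub_colL _ _)).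
  rewrite (submx_trans (sub_colR c d) (sub_colR _ _)) !andbT /=.
  rewrite hc addmx_sub ?scalemx_sub ?addmx_sub ?scalemx_sub //.
  by rewrite -scaleNr scalemx_sub.
apply/eqP; rewrite eqn_leq rank_leq_row /=.
have : row_free Q; last by move/eqP => ->.
apply: inj_row_free => v.
rewrite -[v]hsubmxK -[lsubmx v]hsubmxK /Q !mul_row_col.
rewrite [lsubmx (lsubmx v)]mx11_scalar [rsubmx (lsubmx v)]mx11_scalar [rsubmx v]mx11_scalar.
rewrite !mul_scalar_mx.
set al : C := lsubmx (lsubmx v) 0 0; set be : C := rsubmx (lsubmx v) 0 0; set ga : C := rsubmx v 0 0.
move=> h.
have e (i : 'I_n.+1) : al * a 0 i + be * b 0 i + ga * d 0 i = 0.
  by move: (congr1 (fun M : 'rV[C]_n.+1 => M 0 i) h); rewrite !mxE.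
have e0 := e i0; have e1 := e i1; have e2 := e i2.
rewrite /a /b /d !dsA ?dtA // in e0 e1 e2.
rewrite pj0 pk0 dk0 in e0; rewrite pj1 pk1 dj1 dk1 in e1; rewrite pj2 pk2 dj2 dk2 in e2.
rewrite !expr1n !mul1r !mulr1 in e0 e1 e2.
set de := De j i0 in e0.
have de0 : de != 0 by apply: De_neq0.
have [n2 hn2] : exists n2, n = n2.+2 by exists n.-2; lia.
have hK : K = w ^+ n2.+3 by rewrite -hw hn2.
move: e0 e1 e2; rewrite hn2 /= => e0 e1 e2.
have e2' : (n2.+2 - n2.+1 = 1)%N by lia.
rewrite e2' subnn subn0 in e0 e1 e2.
have E := congr2 (fun x y => x - y) (congr2 (fun x y => x + y)
   (congr1 (fun z => w ^+ n2.+2 * z) e0) (congr1 (fun z => (n2.+1)%:R * de * z) e1))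
   (congr1 (fun z => (n2.+2)%:R * de * w * z) e2).
rewrite /= (_ : w ^+ n2.+2 * 0 + (n2.+1)%:R * de * 0 - (n2.+2)%:R * de * w * 0 = 0) in E;
  last by rewrite !mulr0 subr0 addr0.
have key : ga * (de * K * (n2.+3)%:R) = 0.
  by rewrite -E hK !exprS; ring.
have ga0 : ga = 0.
  move/eqP: key; rewrite mulf_eq0 => /orP [/eqP //|].
  by rewrite !mulf_eq0 (negPf de0) (negPf K0) pnatr_eq0.
have be0 : be = 0.
  have : be * ((n2.+2)%:R * w ^+ n2.+1) = 0 by apply: etrans _ e1; rewrite ga0; ring.
  move/eqP; rewrite mulf_eq0 => /orP[/eqP //|].
  by rewrite mulf_eq0 pnatr_eq0 expf_eq0 (negPf w0) andbF.
have al0 : al = 0.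
  have : al * (de * (n2.+2)%:R) = 0 by apply: etrans _ e0; rewrite ga0 be0; ring.
  move/eqP; rewrite mulf_eq0 => /orP[/eqP //|].
  by rewrite mulf_eq0 (negPf de0) pnatr_eq0.
by rewrite al0 be0 ga0 !raddf0 !row_mx0.
Qed.

Lemma transv w : w ^+ n.+1 = K -> transversal_at (Amat j) (Amat j.+1) (pt w).
Proof.
move=> hw s t s' t' h h'.
have w0 := w_neq0 hw.
have e1 : pt w = 1 *: (rnc_param n 1 w *m Amat j) by rewrite scale1r.
have hab : pe j i1 = (pe j i2).+1 by rewrite pj1 pj2; lia.
have [s0 ->] := get_param hj (oner_neq0 _) w0 e1 hab h.
have hab' : pe j.+1 i1 = (pe j.+1 i2).+1 by rewrite pk1 pk2.
have [s0' ->] := get_param hj1 (invr_neq0 (expf_neq0 2 w0)) w0 (pt_shift hw) hab' h'.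
rewrite !tangent_scale rank_scale ?expf_neq0 //; exact: rank3.
Qed.





Lemma adjacent : rnc_meet_nodally_gen (Amat j) (Amat j.+1).
Proof.
have [W [sW uW hW]] := roots_exist K0.
pose V : 'M[C]_n.+1 := \matrix_(k < n.+1, q < n.+1) (W`_k ^+ q).
have hWk (k : 'I_n.+1) : W`_k ^+ n.+1 = K.
  by apply/eqP; rewrite -hW mem_nth // sW.
have rowP (k : 'I_n.+1) : row k (V *m Amat j) = pt (W`_k).
  rewrite row_mul; congr (_ *m _); apply/matrixP => a b.
  by rewrite !mxE expr1n mul1r.
exists (V *m Amat j); split.
- rewrite unitmx_mul Amat_unit // andbT.
  have -> : V = (Vandermonde n.+1 (\row_k W`_k))^T by apply/matrixP => a b; rewrite !mxE.
  rewrite unitmxE det_tr det_Vandermonde unitfE.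
  apply/prodf_neq0 => a _; apply/prodf_neq0 => b ab; rewrite !mxE subr_eq0.
  by rewrite nth_uniq ?sW //; apply/eqP => e; move: ab; rewrite e ltnn.
- by move=> k; rewrite rowP; apply: pt_on.
- move=> x hx hy.
  have [u [g [hu g0 ex]]] := adj_complete hx hy.
  have uinW : u \in W by rewrite hW hu.
  have ik : (index u W < n.+1)%N by rewrite -sW index_mem.
  exists (Ordinal ik); rewrite rowP /= nth_index //.
  by exists g.
- by move=> k; rewrite rowP; apply: transv.
Qed.

End Adj.
End Chain.

Unset Implicit Arguments.

Theorem lemma4p3 (R : realType) (n : nat) (hodd : odd n) (hn : (3 <= n)%N) :
  let m := (n.+1)./2 in
  exists A : nat -> 'M[R[i]]_n.+1,
    [/\ (forall j, (j < m)%N -> A j \in unitmx),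
        (forall j, (j.+1 < m)%N -> rnc_meet_nodally_gen (A j) (A j.+1)),
        (forall j k, (j.+1 < m)%N -> (k.+1 < m)%N -> j <> k ->
           forall x : 'rV[R[i]]_n.+1,
             ~ (on_rnc (A j) x /\ on_rnc (A j.+1) x /\
                on_rnc (A k) x /\ on_rnc (A k.+1) x)) &
        (forall j k, (k < m)%N -> (j + 2 <= k)%N ->
           forall x : 'rV[R[i]]_n.+1, ~ (on_rnc (A j) x /\ on_rnc (A k) x))].
Proof.
move=> m.
have hm : (2 * m = n.+1)%N.
  have := odd_double_half n.+1; rewrite /= hodd /= add0n -/m => <-.
  by rewrite -mul2n.
exists (@Amat R[i] n); split.
- by move=> j hj; apply: Amat_unit; lia.
- by move=> j hj; apply: adjacent => //; lia.
- by move=> j k hj hk jk x; apply: four => //; lia.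
- by move=> j k hk hjk x; apply: nonadj => //; lia.
Qed.
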